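(* Let $\mathcal{D}$ be a small category and $E$ an effect algebra. The functor $E\otimes-\colon\mathbf{EA}\to\mathbf{EA}$ preserves all colimits over $\mathcal{D}$ if and only if $\mathcal{D}$ is connected, or $E\cong\underline{2}$, or $E\cong\underline{1}$ and $\mathcal{D}$ is nonempty.
   Context: $\mathbf{EA}$ is the category of effect algebras (partial algebras $(E;\oplus,',0,1)$ with $\oplus$ commutative and associative as Kleene identities, $a\oplus b=1$ iff $b=a'$, $a\oplus 1$ defined iff $a=0$) with homomorphisms preserving existing orthosums and $1$; it is cocomplete. $E\otimes F$ denotes the tensor product: the effect algebra with a bihomomorphism $E\times F\to E\otimes F$ (a map additive on existing orthosums in each variable with $1\otimes1=1$) through which every bihomomorphism factors uniquely; $E\otimes-$ is the induced functor. $\underline{2}=\{0,1\}$ is the two-element effect algebra (initial object and tensor unit), and $\underline{1}$ is the one-element effect algebra (terminal object). A category is connected if it is nonempty and any two objects are joined by a zigzag of morphisms. A functor $\Phi$ preserves colimits over $\mathcal{D}$ if for every functor $F\colon\mathcal{D}\to\mathbf{EA}$ and every colimiting cocone $(F(d)\to G)_d$, the cocone $(\Phi F(d)\to\Phi(G))_d$ is colimiting. *)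

(* Defs.v *)
Set Implicit Arguments.
Unset Strict Implicit.

Definition obind {A B : Type} (o : option A) (f : A -> option B) : option B :=
  match o with Some a => f a | None => None end.

(* The partial operation (+) is a total function into [option]; [None] means
   "undefined".  Associativity is the Kleene identity (both sides defined
   simultaneously and then equal). *)
Record EffectAlgebra := {
  ea_car :> Type;
  ea_sum : ea_car -> ea_car -> option ea_car;
  ea_compl : ea_car -> ea_car;
  ea_zero : ea_car;
  ea_one : ea_car;
  ea_comm : forall a b, ea_sum a b = ea_sum b a;
  ea_assoc : forall a b c,
      obind (ea_sum a b) (fun ab => ea_sum ab c)
      = obind (ea_sum b c) (fun bc => ea_sum a bc);
  ea_compl_spec : forall a b, ea_sum a b = Some ea_one <-> b = ea_compl a;
  ea_zero_one : forall a, ea_sum a ea_one <> None <-> a = ea_zero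
}.

Arguments ea_sum {e}.
Arguments ea_one {e}.
Arguments ea_zero {e}.
Arguments ea_compl {e}.

Definition is_hom (E F : EffectAlgebra) (f : E -> F) : Prop :=
  f ea_one = ea_one /\
  forall a b c, ea_sum a b = Some c -> ea_sum (f a) (f b) = Some (f c).

Definition ea_iso (E F : EffectAlgebra) : Prop :=
  exists (f : E -> F) (g : F -> E),
    is_hom f /\ is_hom g /\ (forall x, g (f x) = x) /\ (forall y, f (g y) = y).

Definition is_bihom (E F G : EffectAlgebra) (t : E -> F -> G) : Prop :=
  (forall y a b c, ea_sum a b = Some c -> ea_sum (t a y) (t b y) = Some (t c y)) /\
  (forall x a b c, ea_sum a b = Some c -> ea_sum (t x a) (t x b) = Some (t x c)) /\
  t ea_one ea_one = ea_one.

Definition is_tensor (E F T : EffectAlgebra) (t : E -> F -> T) : Prop :=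
  is_bihom t /\
  forall (G : EffectAlgebra) (g : E -> F -> G), is_bihom g ->
    exists h : T -> G,
      is_hom h /\ (forall x y, h (t x y) = g x y) /\
      (forall h' : T -> G, is_hom h' -> (forall x y, h' (t x y) = g x y) ->
         forall z, h' z = h z).

Definition two_sum (a b : bool) : option bool :=
  match a, b with
  | false, x => Some x
  | true, false => Some true
  | true, true => None
  end.

Lemma two_comm : forall a b, two_sum a b = two_sum b a.
Proof. intros [|] [|]; reflexivity. Qed.
Lemma two_assoc : forall a b c,
  obind (two_sum a b) (fun ab => two_sum ab c)
  = obind (two_sum b c) (fun bc => two_sum a bc).
Proof. intros [|] [|] [|]; reflexivity. Qed.
Lemma two_compl : forall a b, two_sum a b = Some true <-> b = negb a.
Proof. intros [|] [|]; simpl; split; congruence. Qed.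
Lemma two_zero_one : forall a, two_sum a true <> None <-> a = false.
Proof. intros [|]; simpl; split; congruence. Qed.

Definition two : EffectAlgebra :=
  {| ea_car := bool; ea_sum := two_sum; ea_compl := negb;
     ea_zero := false; ea_one := true;
     ea_comm := two_comm; ea_assoc := two_assoc;
     ea_compl_spec := two_compl; ea_zero_one := two_zero_one |}.

Definition one_sum (a b : unit) : option unit := Some tt.
Lemma one_comm : forall a b, one_sum a b = one_sum b a.
Proof. reflexivity. Qed.
Lemma one_assoc : forall a b c,
  obind (one_sum a b) (fun ab => one_sum ab c)
  = obind (one_sum b c) (fun bc => one_sum a bc).
Proof. reflexivity. Qed.
Lemma one_compl : forall a b, one_sum a b = Some tt <-> b = (fun x => x) a.
Proof. intros [] []; split; reflexivity. Qed.
Lemma one_zero_one : forall a, one_sum a tt <> None <-> a = tt.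
Proof. intros []; split; [reflexivity | discriminate]. Qed.

Definition one : EffectAlgebra :=
  {| ea_car := unit; ea_sum := one_sum; ea_compl := fun x => x;
     ea_zero := tt; ea_one := tt;
     ea_comm := one_comm; ea_assoc := one_assoc;
     ea_compl_spec := one_compl; ea_zero_one := one_zero_one |}.

Record SmallCategory := {
  Obj : Type;
  Hom : Obj -> Obj -> Type;
  cid : forall a, Hom a a;
  ccomp : forall a b c, Hom b c -> Hom a b -> Hom a c;
  ccomp_id_l : forall a b (f : Hom a b), ccomp (cid b) f = f;
  ccomp_id_r : forall a b (f : Hom a b), ccomp f (cid a) = f;
  ccomp_assoc : forall a b c d (h : Hom c d) (g : Hom b c) (f : Hom a b),
      ccomp h (ccomp g f) = ccomp (ccomp h g) f
}.

Arguments Hom {s}.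
Arguments cid {s}.
Arguments ccomp {s a b c}.

Inductive zigzag (D : SmallCategory) : Obj D -> Obj D -> Prop :=
| zz_refl : forall a, zigzag a a
| zz_fwd : forall a b c, Hom a b -> zigzag b c -> zigzag a c
| zz_bwd : forall a b c, Hom b a -> zigzag b c -> zigzag a c.

Definition connected (D : SmallCategory) : Prop :=
  inhabited (Obj D) /\ forall a b : Obj D, zigzag a b.

Record Diagram (D : SmallCategory) := {
  dobj : Obj D -> EffectAlgebra;
  dmap : forall a b, Hom a b -> dobj a -> dobj b;
  dmap_hom : forall a b (f : Hom a b), is_hom (dmap f);
  dmap_id : forall a x, dmap (cid a) x = x;
  dmap_comp : forall a b c (g : Hom b c) (f : Hom a b) x,
      dmap (ccomp g f) x = dmap g (dmap f x)
}.

Arguments dmap {D} d {a b}.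

(* Cocones and colimits are stated for raw data (object and morphism maps);
   functoriality is not needed for these notions. *)
Definition is_cocone (D : SmallCategory) (Fo : Obj D -> EffectAlgebra)
  (Fm : forall a b, Hom a b -> Fo a -> Fo b)
  (G : EffectAlgebra) (c : forall d, Fo d -> G) : Prop :=
  (forall d, is_hom (c d)) /\
  (forall a b (f : Hom a b) x, c b (Fm a b f x) = c a x).

Definition is_colimit (D : SmallCategory) (Fo : Obj D -> EffectAlgebra)
  (Fm : forall a b, Hom a b -> Fo a -> Fo b)
  (G : EffectAlgebra) (c : forall d, Fo d -> G) : Prop :=
  is_cocone Fm c /\
  forall (G' : EffectAlgebra) (c' : forall d, Fo d -> G'),
    is_cocone Fm c' ->
    exists u : G -> G',
      is_hom u /\ (forall d x, u (c d x) = c' d x) /\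
      (forall u' : G -> G', is_hom u' -> (forall d x, u' (c d x) = c' d x) ->
         forall z, u' z = u z).

(** [E (x) -] preserves colimits over [D]: for every diagram [F], every
    colimiting cocone [c], and every choice of tensor products
    [E (x) F d], [E (x) G] (unique up to iso), the image diagram with the
    induced maps [id (x) F f] and cocone [id (x) c_d] is colimiting.  The
    induced maps are characterised by their action on pure tensors. *)
Definition tensor_preserves_colimits_over (E : EffectAlgebra) (D : SmallCategory) : Prop :=
  forall (F : Diagram D) (G : EffectAlgebra) (c : forall d, dobj F d -> G),
    is_colimit (fun a b f => dmap F f) c ->
    forall (TF : Obj D -> EffectAlgebra) (tF : forall d, E -> dobj F d -> TF d),
      (forall d, is_tensor (tF d)) ->
    forall (TG : EffectAlgebra) (tG : E -> G -> TG), is_tensor tG ->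
    forall (m : forall a b, Hom a b -> TF a -> TF b),
      (forall a b (f : Hom a b), is_hom (m a b f)) ->
      (forall a b (f : Hom a b) e x, m a b f (tF a e x) = tF b e (dmap F f x)) ->
    forall (h : forall d, TF d -> TG),
      (forall d, is_hom (h d)) ->
      (forall d e x, h d (tF d e x) = tG e (c d x)) ->
      is_colimit m h.

(* Main.v *)
Require Import Defs.
From Stdlib Require Import Classical ClassicalEpsilon ProofIrrelevance Bool.
Set Implicit Arguments.
Unset Strict Implicit.

Lemma assoc_fwd (E : EffectAlgebra) (a b c ab d : E) :
  ea_sum a b = Some ab -> ea_sum ab c = Some d ->
  exists bc, ea_sum b c = Some bc /\ ea_sum a bc = Some d.
Proof.
  intros H1 H2. pose proof (ea_assoc a b c) as H. rewrite H1 in H. simpl in H.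
  rewrite H2 in H. destruct (ea_sum b c) as [bc|]; simpl in H; [|discriminate].
  eauto.
Qed.

Lemma assoc_bwd (E : EffectAlgebra) (a b c bc d : E) :
  ea_sum b c = Some bc -> ea_sum a bc = Some d ->
  exists ab, ea_sum a b = Some ab /\ ea_sum ab c = Some d.
Proof.
  intros H1 H2. pose proof (ea_assoc a b c) as H. rewrite H1 in H. simpl in H.
  rewrite H2 in H. destruct (ea_sum a b) as [ab|]; simpl in H; [|discriminate].
  eauto.
Qed.

Lemma compl_r (E : EffectAlgebra) (a : E) : ea_sum a (ea_compl a) = Some ea_one.
Proof. apply (proj2 (ea_compl_spec a _)); reflexivity. Qed.

Lemma compl_invol (E : EffectAlgebra) (a : E) : ea_compl (ea_compl a) = a.
Proof.
  symmetry. apply (proj1 (ea_compl_spec _ _)). rewrite ea_comm. apply compl_r.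
Qed.

Lemma compl_uniq (E : EffectAlgebra) (a b : E) : ea_sum a b = Some ea_one -> b = ea_compl a.
Proof. intro H. exact (proj1 (ea_compl_spec a b) H). Qed.

Lemma one_compl (E : EffectAlgebra) : ea_compl (@ea_one E) = ea_zero.
Proof.
  apply (proj1 (ea_zero_one _)). rewrite ea_comm, compl_r. discriminate.
Qed.

Lemma zero_r (E : EffectAlgebra) (b : E) : ea_sum b ea_zero = Some b.
Proof.
  assert (H1 : ea_sum (ea_compl b) b = Some ea_one).
  { rewrite ea_comm. apply compl_r. }
  assert (H2 : ea_sum ea_one (@ea_zero E) = Some ea_one).
  { rewrite <- one_compl. apply compl_r. }
  destruct (assoc_fwd H1 H2) as [bc [H3 H4]].
  apply compl_uniq in H4. rewrite compl_invol in H4. subst. exact H3.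
Qed.

Lemma zero_l (E : EffectAlgebra) (b : E) : ea_sum ea_zero b = Some b.
Proof. rewrite ea_comm. apply zero_r. Qed.

Lemma cancel (E : EffectAlgebra) (a b c x : E) :
  ea_sum a b = Some x -> ea_sum a c = Some x -> b = c.
Proof.
  intros H1 H2.
  pose proof (compl_r x) as H3.
  destruct (assoc_fwd H1 H3) as [bt [Hb1 Hb2]].
  destruct (assoc_fwd H2 H3) as [ct [Hc1 Hc2]].
  apply compl_uniq in Hb2. apply compl_uniq in Hc2. subst bt ct.
  assert (H4 : ea_sum (ea_compl a) a = Some ea_one) by (rewrite ea_comm; apply compl_r).
  destruct (assoc_fwd Hb1 H4) as [w1 [Hw1 Hw1']].
  destruct (assoc_fwd Hc1 H4) as [w2 [Hw2 Hw2']].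
  rewrite Hw1 in Hw2. injection Hw2 as ->.
  apply compl_uniq in Hw1'. apply compl_uniq in Hw2'.
  rewrite <- (compl_invol b), <- (compl_invol c), <- Hw1', <- Hw2'. reflexivity.
Qed.

Lemma positivity (E : EffectAlgebra) (a b : E) : ea_sum a b = Some ea_zero -> a = ea_zero.
Proof.
  intro H. pose proof (zero_l (@ea_one E)) as H2.
  destruct (assoc_fwd H H2) as [bc [H3 _]].
  assert (b = ea_zero) by (apply (proj1 (ea_zero_one b)); congruence).
  subst b. rewrite zero_r in H. congruence.
Qed.

Lemma one_sum_zero (E : EffectAlgebra) (b c : E) : ea_sum ea_one b = Some c -> b = ea_zero.
Proof.
  intro H. apply (proj1 (ea_zero_one b)). rewrite ea_comm, H. discriminate.
Qed.

Lemma triv (E : EffectAlgebra) : (@ea_zero E) = ea_one -> forall a : E, a = ea_zero.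
Proof.
  intros H a. apply (proj1 (ea_zero_one a)). rewrite <- H, zero_r. discriminate.
Qed.

Definition le (E : EffectAlgebra) (a b : E) := exists z, ea_sum a z = Some b.

Lemma le_refl (E : EffectAlgebra) (a : E) : le a a.
Proof. exists ea_zero. apply zero_r. Qed.
Lemma le_zero (E : EffectAlgebra) (a : E) : le ea_zero a.
Proof. exists a. apply zero_l. Qed.
Lemma le_sum_l (E : EffectAlgebra) (a b c : E) : ea_sum a b = Some c -> le a c.
Proof. intro H; exists b; exact H. Qed.
Lemma le_sum_r (E : EffectAlgebra) (a b c : E) : ea_sum a b = Some c -> le b c.
Proof. intro H; exists a; rewrite ea_comm; exact H. Qed.
Lemma le_trans (E : EffectAlgebra) (a b c : E) : le a b -> le b c -> le a c.
Proof.
  intros [z1 H1] [z2 H2]. destruct (assoc_fwd H1 H2) as [w [_ Hw]]. exists w; exact Hw.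
Qed.
Lemma le_antisym (E : EffectAlgebra) (a b : E) : le a b -> le b a -> a = b.
Proof.
  intros [z1 H1] [z2 H2]. destruct (assoc_fwd H1 H2) as [w [Hw1 Hw2]].
  assert (w = ea_zero) by (apply (cancel Hw2); apply zero_r). subst w.
  apply positivity in Hw1. subst z1. rewrite zero_r in H1. congruence.
Qed.

Lemma shuffle (E : EffectAlgebra) (a b c d x y z : E) :
  ea_sum a b = Some x -> ea_sum c d = Some y -> ea_sum x y = Some z ->
  exists p q, ea_sum a c = Some p /\ ea_sum b d = Some q /\ ea_sum p q = Some z.
Proof.
  intros H1 H2 H3.
  destruct (assoc_fwd H1 H3) as [by_ [H4 H5]].
  rewrite ea_comm in H4.
  destruct (assoc_fwd H2 H4) as [db [H6 H7]].
  destruct (assoc_bwd H7 H5) as [p [H8 H9]].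
  exists p, db. rewrite ea_comm in H6. auto.
Qed.

Lemma sum_le_bound (E : EffectAlgebra) (a b k1 k2 K : E) :
  le a k1 -> le b k2 -> ea_sum k1 k2 = Some K -> exists z, ea_sum a b = Some z /\ le z K.
Proof.
  intros [z1 H1] [z2 H2] H3.
  destruct (shuffle H1 H2 H3) as [p [q [Hp [Hq Hpq]]]].
  exists p; split; [exact Hp | exists q; exact Hpq].
Qed.

Lemma hom_one (E F : EffectAlgebra) (f : E -> F) : is_hom f -> f ea_one = ea_one.
Proof. intros [H _]; exact H. Qed.
Lemma hom_sum (E F : EffectAlgebra) (f : E -> F) : is_hom f ->
  forall a b c, ea_sum a b = Some c -> ea_sum (f a) (f b) = Some (f c).
Proof. intros [_ H]; exact H. Qed.

Lemma hom_zero (E F : EffectAlgebra) (f : E -> F) : is_hom f -> f ea_zero = ea_zero.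
Proof.
  intro Hf. pose proof (hom_sum Hf (zero_r (@ea_zero E))) as H.
  apply (cancel H). apply zero_r.
Qed.

Lemma hom_le (E F : EffectAlgebra) (f : E -> F) (a b : E) : is_hom f -> le a b -> le (f a) (f b).
Proof. intros Hf [z H]. exists (f z). exact (hom_sum Hf H). Qed.

Lemma hom_comp (E F G : EffectAlgebra) (f : E -> F) (g : F -> G) :
  is_hom f -> is_hom g -> is_hom (fun x => g (f x)).
Proof.
  intros Hf Hg. split.
  - rewrite (hom_one Hf). apply (hom_one Hg).
  - intros a b c H. apply (hom_sum Hg). apply (hom_sum Hf). exact H.
Qed.

Lemma hom_id (E : EffectAlgebra) : is_hom (fun x : E => x).
Proof. split; auto. Qed.

Lemma bihom_zero_l (E F G : EffectAlgebra) (t : E -> F -> G) :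
  is_bihom t -> forall y, t ea_zero y = ea_zero.
Proof.
  intros [H1 _] y. pose proof (H1 y _ _ _ (zero_r (@ea_zero E))) as H.
  apply (cancel H). apply zero_r.
Qed.
Lemma bihom_zero_r (E F G : EffectAlgebra) (t : E -> F -> G) :
  is_bihom t -> forall x, t x ea_zero = ea_zero.
Proof.
  intros [_ [H1 _]] x. pose proof (H1 x _ _ _ (zero_r (@ea_zero F))) as H.
  apply (cancel H). apply zero_r.
Qed.

Lemma bihom_comp (E F G H : EffectAlgebra) (t : E -> F -> G) (q : G -> H) :
  is_hom q -> is_bihom t -> is_bihom (fun x y => q (t x y)).
Proof.
  intros Hq [H1 [H2 H3]]. split; [|split].
  - intros y a b c Hs. apply (hom_sum Hq). auto.
  - intros x a b c Hs. apply (hom_sum Hq). auto.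
  - rewrite H3. apply (hom_one Hq).
Qed.

Lemma tensor_ext (E F T G : EffectAlgebra) (t : E -> F -> T) (p q : T -> G) :
  is_tensor t -> is_hom p -> is_hom q -> (forall x y, p (t x y) = q (t x y)) ->
  forall z, p z = q z.
Proof.
  intros [Ht Hu] Hp Hq Hpq z.
  destruct (Hu G (fun x y => q (t x y)) (bihom_comp Hq Ht)) as [h [_ [_ Huniq]]].
  rewrite (Huniq p Hp Hpq z), (Huniq q Hq (fun _ _ => eq_refl) z). reflexivity.
Qed.

Record RawEA := {
 r_T : Type; r_P : r_T -> Prop; r_s : r_T -> r_T -> option r_T; r_c : r_T -> r_T;
 r_z : r_T; r_o : r_T;
 r_Pz : r_P r_z; r_Po : r_P r_o; r_Pc : forall x, r_P x -> r_P (r_c x);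
 r_Ps : forall x y w, r_P x -> r_P y -> r_s x y = Some w -> r_P w;
 r_comm : forall x y, r_P x -> r_P y -> r_s x y = r_s y x;
 r_assoc1 : forall x y w v, r_P x -> r_P y -> r_P w ->
   obind (r_s x y) (fun a => r_s a w) = Some v -> obind (r_s y w) (fun b => r_s x b) = Some v;
 r_compl : forall x y, r_P x -> r_P y -> (r_s x y = Some r_o <-> y = r_c x);
 r_zo : forall x, r_P x -> (r_s x r_o <> None <-> x = r_z) }.

Definition tosub (T : Type) (P : T -> Prop) (w : T) : option {t | P t} :=
  match excluded_middle_informative (P w) with
  | left p => Some (exist _ w p) | right _ => None end.

Definition subT (R : RawEA) := {t : r_T R | @r_P R t}.
Definition ssum (R : RawEA) (x y : subT R) : option (subT R) :=
  obind (@r_s R (proj1_sig x) (proj1_sig y)) (@tosub _ (@r_P R)).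

Lemma val_inj (R : RawEA) (x y : subT R) : proj1_sig x = proj1_sig y -> x = y.
Proof.
  destruct x as [x px], y as [y py]; simpl; intro; subst. f_equal. apply proof_irrelevance.
Qed.

Lemma omap_inj (R : RawEA) (o1 o2 : option (subT R)) :
  option_map (@proj1_sig _ _) o1 = option_map (@proj1_sig _ _) o2 -> o1 = o2.
Proof.
  destruct o1, o2; simpl; intro H; try discriminate; auto.
  injection H as H. f_equal. apply val_inj. exact H.
Qed.

Lemma ssum_val (R : RawEA) (x y : subT R) :
  option_map (@proj1_sig _ _) (ssum x y) = @r_s R (proj1_sig x) (proj1_sig y).
Proof.
  unfold ssum. destruct (@r_s R (proj1_sig x) (proj1_sig y)) as [w|] eqn:H; simpl; auto.
  unfold tosub. destruct (excluded_middle_informative (@r_P R w)) as [p|n]; simpl; auto.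
  exfalso; apply n. exact (r_Ps (proj2_sig x) (proj2_sig y) H).
Qed.

Lemma ssum_some (R : RawEA) (x y w : subT R) :
  ssum x y = Some w <-> @r_s R (proj1_sig x) (proj1_sig y) = Some (proj1_sig w).
Proof.
  rewrite <- ssum_val. split; intro H.
  - rewrite H; reflexivity.
  - apply omap_inj. rewrite H; reflexivity.
Qed.

Lemma r_assoc (R : RawEA) (x y w : r_T R) : @r_P R x -> @r_P R y -> @r_P R w ->
  obind (@r_s R x y) (fun a => @r_s R a w) = obind (@r_s R y w) (fun b => @r_s R x b).
Proof.
  intros Px Py Pw.
  destruct (obind (@r_s R y w) (fun b => @r_s R x b)) as [v|] eqn:H2.
  - destruct (@r_s R y w) as [b|] eqn:Hb; simpl in H2; [|discriminate].
    assert (Pb : @r_P R b) by exact (r_Ps Py Pw Hb).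
    assert (H3 : obind (@r_s R w y) (fun b => @r_s R b x) = Some v).
    { rewrite (r_comm Pw Py), Hb. simpl. rewrite (r_comm Pb Px). exact H2. }
    pose proof (r_assoc1 Pw Py Px H3) as H4.
    destruct (@r_s R y x) as [a|] eqn:Ha; simpl in H4; [|discriminate].
    assert (Pa : @r_P R a) by exact (r_Ps Py Px Ha).
    rewrite (r_comm Px Py), Ha. simpl. rewrite (r_comm Pa Pw). exact H4.
  - destruct (obind (@r_s R x y) (fun a => @r_s R a w)) as [v|] eqn:H1; auto.
    rewrite (r_assoc1 Px Py Pw H1) in H2. discriminate.
Qed.

Lemma obind_val (R : RawEA) (x y w : subT R) :
  option_map (@proj1_sig _ _) (obind (ssum x y) (fun a => ssum a w)) =
  obind (@r_s R (proj1_sig x) (proj1_sig y)) (fun a => @r_s R a (proj1_sig w)).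
Proof.
  rewrite <- ssum_val. destruct (ssum x y) as [a|]; simpl; auto. apply ssum_val.
Qed.
Lemma obind_val2 (R : RawEA) (x y w : subT R) :
  option_map (@proj1_sig _ _) (obind (ssum y w) (fun b => ssum x b)) =
  obind (@r_s R (proj1_sig y) (proj1_sig w)) (fun b => @r_s R (proj1_sig x) b).
Proof.
  rewrite <- ssum_val. destruct (ssum y w) as [a|]; simpl; auto. apply ssum_val.
Qed.

Definition sz (R : RawEA) : subT R := exist _ (r_z R) (r_Pz R).
Definition so (R : RawEA) : subT R := exist _ (r_o R) (r_Po R).
Definition sc (R : RawEA) (x : subT R) : subT R :=
  exist _ (@r_c R (proj1_sig x)) (r_Pc (proj2_sig x)).

Lemma s_comm (R : RawEA) (x y : subT R) : ssum x y = ssum y x.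
Proof. apply omap_inj. rewrite !ssum_val. apply r_comm; apply proj2_sig. Qed.
Lemma s_assoc (R : RawEA) (x y w : subT R) :
  obind (ssum x y) (fun a => ssum a w) = obind (ssum y w) (fun b => ssum x b).
Proof.
  apply omap_inj. rewrite obind_val, obind_val2. apply r_assoc; apply proj2_sig.
Qed.
Lemma s_compl (R : RawEA) (x y : subT R) : ssum x y = Some (so R) <-> y = sc x.
Proof.
  rewrite ssum_some. simpl. rewrite (r_compl (proj2_sig x) (proj2_sig y)).
  split; intro H.
  - apply val_inj. exact H.
  - rewrite H. reflexivity.
Qed.
Lemma s_zo (R : RawEA) (x : subT R) : ssum x (so R) <> None <-> x = sz R.
Proof.
  assert (H := ssum_val x (so R)). simpl in H.
  split.
  - intro H1. apply val_inj. simpl. apply (r_zo (proj2_sig x)). intro H2. apply H1.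
    rewrite H2 in H. destruct (ssum x (so R)); simpl in H; congruence.
  - intros H1 H2. subst x. simpl in H. apply (proj2 (r_zo (r_Pz R)) eq_refl).
    rewrite <- H, H2. reflexivity.
Qed.
Lemma s_zo' (R : RawEA) (x : subT R) : ssum x (so R) <> None <-> x = sz R.
Proof.
  rewrite s_zo. tauto.
Qed.

Definition subEA (R : RawEA) : EffectAlgebra :=
  {| ea_car := subT R; ea_sum := @ssum R; ea_compl := @sc R; ea_zero := sz R; ea_one := so R;
     ea_comm := @s_comm R; ea_assoc := @s_assoc R; ea_compl_spec := @s_compl R;
     ea_zero_one := fun x => iff_trans (s_zo x) (conj (fun H => H) (fun H => H)) |}.

Lemma lift_hom (R : RawEA) (A : EffectAlgebra) (f : A -> r_T R) (pf : forall a, @r_P R (f a)) :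
  f ea_one = r_o R ->
  (forall a b c, ea_sum a b = Some c -> @r_s R (f a) (f b) = Some (f c)) ->
  is_hom (E:=A) (F:=subEA R) (fun a => exist _ (f a) (pf a)).
Proof.
  intros H1 H2. split.
  - apply val_inj. simpl. exact H1.
  - intros a b c H. simpl. apply ssum_some. simpl. auto.
Qed.

Lemma val_sum (R : RawEA) (x y w : subEA R) : ea_sum x y = Some w ->
  @r_s R (proj1_sig x) (proj1_sig y) = Some (proj1_sig w).
Proof. intro H. apply ssum_some. exact H. Qed.

Definition i_s (F : EffectAlgebra) (k : F) (x y : F) : option F :=
  obind (ea_sum x y) (fun z => if excluded_middle_informative (le z k) then Some z else None).
Definition i_c (F : EffectAlgebra) (k : F) (x : F) : F :=
  epsilon (inhabits ea_zero) (fun z => ea_sum x z = Some k).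

Lemma i_s_spec (F : EffectAlgebra) (k x y z : F) :
  i_s k x y = Some z <-> ea_sum x y = Some z /\ le z k.
Proof.
  unfold i_s. destruct (ea_sum x y) as [w|]; simpl.
  - destruct (excluded_middle_informative (le w k)); split; intro H.
    + injection H as ->. auto.
    + destruct H as [H _]. congruence.
    + discriminate.
    + destruct H as [H1 H2]. injection H1 as ->. contradiction.
  - split; [discriminate | intros [H _]; discriminate].
Qed.

Lemma i_c_spec (F : EffectAlgebra) (k x : F) : le x k -> ea_sum x (i_c k x) = Some k.
Proof. intro H. unfold i_c. apply (epsilon_spec (inhabits ea_zero) (fun z => ea_sum x z = Some k) H). Qed.

Definition intervalRaw (F : EffectAlgebra) (k : F) : RawEA.
Proof.
  refine {| r_T := F; r_P := fun x => le x k; r_s := i_s k; r_c := i_c k;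
            r_z := ea_zero; r_o := k |}.
  - apply le_zero.
  - apply le_refl.
  - intros x Hx. exact (le_sum_r (i_c_spec Hx)).
  - intros x y w _ _ H. apply i_s_spec in H. tauto.
  - intros x y _ _. unfold i_s. rewrite ea_comm. reflexivity.
  - intros x y w v Px Py Pw H.
    destruct (i_s k x y) as [a|] eqn:Ha; simpl in H; [|discriminate].
    apply i_s_spec in Ha. apply i_s_spec in H. destruct Ha as [Ha _], H as [H Hv].
    destruct (assoc_fwd Ha H) as [b [Hb1 Hb2]].
    assert (Hb : i_s k y w = Some b).
    { apply i_s_spec. split; auto. exact (le_trans (le_sum_r Hb2) Hv). }
    rewrite Hb. simpl. apply i_s_spec. auto.
  - intros x y Px Py. rewrite i_s_spec. split.
    + intros [H _]. exact (cancel H (i_c_spec Px)).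
    + intros ->. split; [apply i_c_spec; auto | apply le_refl].
  - intros x Px. split.
    + intro H. destruct (i_s k x k) as [w|] eqn:Hw; [|congruence].
      apply i_s_spec in Hw. destruct Hw as [Hw Hwk].
      assert (w = k) by (apply le_antisym; [exact Hwk | exact (le_sum_r Hw)]). subst w.
      rewrite ea_comm in Hw. symmetry. apply (cancel (zero_r k)). exact Hw.
    + intros ->. assert (H : i_s k ea_zero k = Some k) by (apply i_s_spec; split; [apply zero_l | apply le_refl]).
      rewrite H. discriminate.
Defined.

Definition interval (F : EffectAlgebra) (k : F) : EffectAlgebra := subEA (intervalRaw k).

Lemma zero_compl (E : EffectAlgebra) : ea_compl (@ea_zero E) = ea_one.
Proof. rewrite <- one_compl, compl_invol. reflexivity. Qed.

Lemma sum_nz_not_one (E : EffectAlgebra) (a b c : E) :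
  ea_sum a b = Some c -> b <> ea_zero -> a <> ea_one.
Proof. intros H Hb Ha. subst a. apply Hb. exact (one_sum_zero H). Qed.

Lemma sum_zero_l_eq (E : EffectAlgebra) (b c : E) : ea_sum ea_zero b = Some c -> c = b.
Proof. intro H. rewrite zero_l in H. congruence. Qed.
Lemma sum_zero_r_eq (E : EffectAlgebra) (b c : E) : ea_sum b ea_zero = Some c -> c = b.
Proof. intro H. rewrite zero_r in H. congruence. Qed.

Definition tagf (E : EffectAlgebra) (z : E) (t u : bool) : bool :=
  if excluded_middle_informative (z = ea_one) then false else orb t u.

Lemma tagf_one (E : EffectAlgebra) (z : E) t u : z = ea_one -> tagf z t u = false.
Proof. intro H. unfold tagf. destruct (excluded_middle_informative _); congruence. Qed.
Lemma tagf_not (E : EffectAlgebra) (z : E) t u : z <> ea_one -> tagf z t u = orb t u.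
Proof. intro H. unfold tagf. destruct (excluded_middle_informative _); congruence. Qed.

Lemma tagf_comm (E : EffectAlgebra) (z : E) t u : tagf z t u = tagf z u t.
Proof. unfold tagf. rewrite orb_comm. reflexivity. Qed.

Definition h_P (E : EffectAlgebra) (p : E * bool) : Prop :=
  snd p = true -> fst p <> ea_zero /\ fst p <> ea_one.

Definition h_s (E : EffectAlgebra) (p q : E * bool) : option (E * bool) :=
  obind (ea_sum (fst p) (fst q)) (fun z =>
    if excluded_middle_informative (snd p = snd q \/ fst p = ea_zero \/ fst q = ea_zero)
    then Some (z, tagf z (snd p) (snd q)) else None).

Lemma h_s_spec (E : EffectAlgebra) (x y z : E) (t u v : bool) :
  h_s (x, t) (y, u) = Some (z, v) <->
  ea_sum x y = Some z /\ (t = u \/ x = ea_zero \/ y = ea_zero) /\ v = tagf z t u.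
Proof.
  unfold h_s; simpl. destruct (ea_sum x y) as [w|]; simpl.
  - destruct (excluded_middle_informative _); split; intro H.
    + injection H as -> ->. auto.
    + destruct H as [H1 [_ H2]]. injection H1 as ->. subst. reflexivity.
    + discriminate.
    + destruct H as [_ [H _]]. contradiction.
  - split; [discriminate | intros [H _]; discriminate].
Qed.

Lemma hv_zero (E : EffectAlgebra) (x : E) t : h_P (x, t) -> x = ea_zero -> t = false.
Proof. unfold h_P; simpl. intros H Hx. destruct t; auto. destruct (H eq_refl); contradiction. Qed.
Lemma hv_one (E : EffectAlgebra) (x : E) t : h_P (x, t) -> x = ea_one -> t = false.
Proof. unfold h_P; simpl. intros H Hx. destruct t; auto. destruct (H eq_refl); contradiction. Qed.

Definition hsRaw (E : EffectAlgebra) : RawEA.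
Proof.
  refine {| r_T := E * bool; r_P := @h_P E; r_s := @h_s E;
            r_c := fun p => (ea_compl (fst p), snd p);
            r_z := (ea_zero, false); r_o := (ea_one, false) |}.
  - unfold h_P; simpl; discriminate.
  - unfold h_P; simpl; discriminate.
  - intros [x t] H. unfold h_P in *; simpl in *. intro Ht. destruct (H Ht) as [H1 H2].
    split; intro H3.
    + apply H2. rewrite <- (compl_invol x), H3. apply zero_compl.
    + apply H1. rewrite <- (compl_invol x), H3. apply one_compl.
  - intros [x t] [y u] [z v] Px Py H. apply h_s_spec in H. destruct H as [Hs [Hc Hv]].
    unfold h_P; simpl. intro Hv'. subst v.
    destruct (classic (z = ea_one)) as [Hz|Hz].
    + rewrite tagf_one in Hv'; auto. discriminate.
    + rewrite tagf_not in Hv'; auto. split; auto. intro Hz0. subst z.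
      apply orb_true_iff in Hv'. destruct Hv' as [Ht|Hu].
      * subst t. destruct (Px eq_refl) as [Hx _]. apply Hx. exact (positivity Hs).
      * subst u. destruct (Py eq_refl) as [Hy _]. apply Hy. rewrite ea_comm in Hs. exact (positivity Hs).
  - intros [x t] [y u] _ _. unfold h_s; simpl. rewrite ea_comm.
    destruct (ea_sum y x) as [z|]; simpl; auto.
    rewrite (tagf_comm z t u).
    destruct (excluded_middle_informative (t = u \/ x = ea_zero \/ y = ea_zero)) as [H1|H1];
    destruct (excluded_middle_informative (u = t \/ y = ea_zero \/ x = ea_zero)) as [H2|H2]; auto;
    [destruct H2 | destruct H1]; intuition.
  - intros [x t] [y u] [z v] [r rv] Px Py Pz H.
    destruct (h_s (x, t) (y, u)) as [[a ta]|] eqn:Ha; simpl in H; [|discriminate].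
    apply h_s_spec in Ha. apply h_s_spec in H.
    destruct Ha as [Ha [C1 Hta]]. destruct H as [Hb [C2 Hrv]].
    destruct (assoc_fwd Ha Hb) as [c [Hc1 Hc2]].
    assert (Hyz : h_s (y, u) (z, v) = Some (c, tagf c u v)).
    { apply h_s_spec. split; [exact Hc1|split; [|reflexivity]].
      destruct (classic (y = ea_zero)) as [Hy|Hy]; [auto|].
      destruct (classic (z = ea_zero)) as [Hz|Hz]; [auto|].
      left.
      assert (Ha0 : a <> ea_zero). { intro H0. subst a. apply Hy. rewrite ea_comm in Ha. exact (positivity Ha). }
      assert (Ha1 : a <> ea_one) by exact (sum_nz_not_one Hb Hz).
      rewrite tagf_not in Hta by exact Ha1.
      destruct C2 as [C2|[C2|C2]]; try contradiction.
      destruct (classic (x = ea_zero)) as [Hx|Hx].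
      - rewrite (hv_zero Px Hx) in Hta. simpl in Hta. congruence.
      - destruct C1 as [C1|[C1|C1]]; try contradiction. subst. destruct u; reflexivity. }
    rewrite Hyz. simpl. apply h_s_spec. split; [exact Hc2|split].
    + destruct (classic (x = ea_zero)) as [Hx|Hx]; [auto|].
      destruct (classic (c = ea_zero)) as [Hc|Hc]; [auto|].
      left.
      assert (Hc1' : c <> ea_one). { rewrite ea_comm in Hc2. exact (sum_nz_not_one Hc2 Hx). }
      rewrite tagf_not by exact Hc1'.
      assert (Ha0 : a <> ea_zero). { intro H0. subst a. apply Hx. exact (positivity Ha). }
      destruct (classic (y = ea_zero)) as [Hy|Hy].
      * rewrite (hv_zero Py Hy). simpl.
        subst y. apply sum_zero_l_eq in Hc1. subst c.
        apply sum_zero_r_eq in Ha. subst a.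
        assert (Ha1 : x <> ea_one) by exact (sum_nz_not_one Hb Hc).
        rewrite tagf_not in Hta by exact Ha1. rewrite (hv_zero Py eq_refl) in Hta.
        rewrite orb_false_r in Hta.
        destruct C2 as [C2|[C2|C2]]; try contradiction. congruence.
      * destruct C1 as [C1|[C1|C1]]; try contradiction. subst u.
        destruct (classic (z = ea_zero)) as [Hz|Hz].
        -- rewrite (hv_zero Pz Hz), orb_false_r. reflexivity.
        -- assert (Ha1 : a <> ea_one) by exact (sum_nz_not_one Hb Hz).
           rewrite tagf_not in Hta by exact Ha1. rewrite orb_diag in Hta.
           destruct C2 as [C2|[C2|C2]]; try contradiction. subst. rewrite orb_diag. reflexivity.
    + subst rv ta. destruct (classic (r = ea_one)) as [Hr|Hr].
      * rewrite !tagf_one by exact Hr. reflexivity.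
      * idtac.
        assert (Ha1 : a <> ea_one). { intro H1. subst a. apply Hr. rewrite (one_sum_zero Hb) in Hb. apply sum_zero_r_eq in Hb. auto. }
        assert (Hc1' : c <> ea_one). { intro H1. subst c. apply Hr. rewrite ea_comm in Hc2. rewrite (one_sum_zero Hc2) in Hc2. apply sum_zero_r_eq in Hc2. auto. }
        rewrite (tagf_not t u Ha1), (tagf_not u v Hc1'). rewrite (tagf_not (t||u) v Hr), (tagf_not t (u||v) Hr). destruct t, u, v; reflexivity.
  - intros [x t] [y u] Px Py. simpl. split.
    + intro H. apply h_s_spec in H. destruct H as [Hs [Hc Hv]].
      apply compl_uniq in Hs. subst y. f_equal.
      destruct Hc as [Hc|[Hc|Hc]]; [congruence| |].
      * rewrite (hv_zero Px Hc). apply (hv_one Py). rewrite Hc. apply zero_compl.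
      * rewrite (hv_zero Py Hc). symmetry. apply (hv_one Px). rewrite <- (compl_invol x), Hc. apply zero_compl.
    + intro H. injection H as -> ->. apply h_s_spec. split; [apply compl_r|split; [auto|]].
      rewrite tagf_one; reflexivity.
  - intros [x t] Px. simpl. split.
    + intro H. destruct (h_s (x, t) (ea_one, false)) as [[z v]|] eqn:Hs; [|congruence].
      apply h_s_spec in Hs. destruct Hs as [Hs _].
      assert (Hx : x = ea_zero) by (apply (proj1 (ea_zero_one x)); congruence).
      rewrite (hv_zero Px Hx), Hx. reflexivity.
    + intro H. injection H as -> ->.
      assert (Hs : h_s (ea_zero, false) (@ea_one E, false) = Some (ea_one, false)).
      { apply h_s_spec. split; [apply zero_l|split; [auto|]]. rewrite tagf_one; reflexivity. }
      rewrite Hs. discriminate.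
Defined.

Definition hsum (E : EffectAlgebra) : EffectAlgebra := subEA (hsRaw E).

Lemma bh_l (E F G : EffectAlgebra) (t : E -> F -> G) : is_bihom t ->
  forall y a b c, ea_sum a b = Some c -> ea_sum (t a y) (t b y) = Some (t c y).
Proof. intros [H _]; exact H. Qed.
Lemma bh_r (E F G : EffectAlgebra) (t : E -> F -> G) : is_bihom t ->
  forall x a b c, ea_sum a b = Some c -> ea_sum (t x a) (t x b) = Some (t x c).
Proof. intros [_ [H _]]; exact H. Qed.
Lemma bh_one (E F G : EffectAlgebra) (t : E -> F -> G) : is_bihom t -> t ea_one ea_one = ea_one.
Proof. intros [_ [_ H]]; exact H. Qed.
Lemma tens_bihom (E F T : EffectAlgebra) (t : E -> F -> T) : is_tensor t -> is_bihom t.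
Proof. intros [H _]; exact H. Qed.

Lemma image_cocone (D : SmallCategory) (E : EffectAlgebra) (F : Diagram D)
  (G : EffectAlgebra) (c : forall d, dobj F d -> G) :
  is_colimit (fun a b f => dmap F f) c ->
  forall (TF : Obj D -> EffectAlgebra) (tF : forall d, E -> dobj F d -> TF d),
  (forall d, is_tensor (tF d)) ->
  forall (TG : EffectAlgebra) (tG : E -> G -> TG),
  forall (m : forall a b, Hom a b -> TF a -> TF b),
  (forall a b (f : Hom a b), is_hom (m a b f)) ->
  (forall a b (f : Hom a b) e x, m a b f (tF a e x) = tF b e (dmap F f x)) ->
  forall (h : forall d, TF d -> TG),
  (forall d, is_hom (h d)) ->
  (forall d e x, h d (tF d e x) = tG e (c d x)) ->
  is_cocone m h.
Proof.
  intros [[Hchom Hccomp] _] TF tF HtF TG tG m Hm Hmeq h Hh Hheq.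
  split; [exact Hh|].
  intros a b f z.
  apply (tensor_ext (HtF a) (hom_comp (Hm a b f) (Hh b)) (Hh a)).
  intros e x. rewrite Hmeq, !Hheq, Hccomp. reflexivity.
Qed.

Lemma conn_pres (D : SmallCategory) (E : EffectAlgebra) :
  connected D -> tensor_preserves_colimits_over E D.
Proof.
  intros [[d0] Hzz] F G c Hc TF tF HtF TG tG HtG m Hm Hmeq h Hh Hheq.
  split; [exact (image_cocone Hc HtF Hm Hmeq Hh Hheq)|].
  destruct Hc as [[Hchom Hccomp] Hcuniv].
  intros G' c' [Hc'hom Hc'comp].
  pose (k := fun e => c' d0 (tF d0 e ea_one)).
  assert (Hstep : forall e a b (f : Hom a b), c' a (tF a e ea_one) = c' b (tF b e ea_one)).
  { intros e a b f. rewrite <- (hom_one (dmap_hom F f)), <- Hmeq, Hc'comp. reflexivity. }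
  assert (Hk : forall d e, c' d (tF d e ea_one) = k e).
  { intros d e. unfold k.
    assert (Hz : forall a b, zigzag a b -> c' a (tF a e ea_one) = c' b (tF b e ea_one)).
    { induction 1 as [a|a b c0 f Z IH|a b c0 f Z IH]; auto.
      - rewrite <- IH. apply (Hstep e _ _ f).
      - rewrite <- IH. symmetry. apply (Hstep e _ _ f). }
    symmetry. apply Hz. apply Hzz. }
  assert (Hle : forall d e x, le (c' d (tF d e x)) (k e)).
  { intros d e x. rewrite <- (Hk d e). apply (hom_le (Hc'hom d)).
    exact (le_sum_l (bh_r (tens_bihom (HtF d)) e (compl_r x))). }
  pose (leg := fun e d (x : dobj F d) => (exist _ (c' d (tF d e x)) (Hle d e x) : interval (k e))).
  assert (Hleg : forall e, is_cocone (fun a b f => dmap F f) (leg e)).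
  { intro e. split.
    - intro d. apply (@lift_hom (intervalRaw (k e)) _ (fun x => c' d (tF d e x)) (Hle d e)).
      + apply Hk.
      + intros a b c0 H. simpl. apply i_s_spec. split; [|apply Hle].
        apply (hom_sum (Hc'hom d)). apply (bh_r (tens_bihom (HtF d))). exact H.
    - intros a b f x. apply val_inj. simpl. rewrite <- Hmeq, Hc'comp. reflexivity. }
  pose (U := fun e => proj1_sig (constructive_indefinite_description _ (Hcuniv _ _ (Hleg e)))).
  assert (HU : forall e, is_hom (U e) /\ (forall d x, U e (c d x) = leg e d x) /\
     (forall u' : G -> interval (k e), is_hom u' -> (forall d x, u' (c d x) = leg e d x) ->
         forall z, u' z = U e z)).
  { intro e. unfold U. destruct (constructive_indefinite_description _ _) as [u Hu]. exact Hu. }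
  pose (g := fun e y => proj1_sig (U e y : subT (intervalRaw (k e)))).
  assert (Hg_le : forall e y, le (g e y) (k e)).
  { intros e y. exact (proj2_sig (U e y : subT (intervalRaw (k e)))). }
  assert (Hg_one : forall e, g e ea_one = k e).
  { intro e. unfold g. destruct (HU e) as [Hh1 _]. rewrite (hom_one Hh1). reflexivity. }
  assert (Hg_c : forall e d x, g e (c d x) = c' d (tF d e x)).
  { intros e d x. unfold g. destruct (HU e) as [_ [H _]]. rewrite H. reflexivity. }
  assert (Hg_add : forall e a b c0, ea_sum a b = Some c0 -> ea_sum (g e a) (g e b) = Some (g e c0)).
  { intros e a b c0 H. destruct (HU e) as [Hu _].
    pose proof (val_sum (R := intervalRaw (k e)) (hom_sum Hu H)) as X.
    apply i_s_spec in X. apply X. }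
  assert (Hgb : is_bihom g).
  { split; [|split].
    - intros y e1 e2 e3 He.
      assert (Hk12 : ea_sum (k e1) (k e2) = Some (k e3)).
      { unfold k. apply (hom_sum (Hc'hom d0)). apply (bh_l (tens_bihom (HtF d0))). exact He. }
      pose (w := fun y => match ea_sum (g e1 y) (g e2 y) with Some z => z | None => ea_zero end).
      assert (Hw : forall y, ea_sum (g e1 y) (g e2 y) = Some (w y) /\ le (w y) (k e3)).
      { intro y0. destruct (sum_le_bound (Hg_le e1 y0) (Hg_le e2 y0) Hk12) as [z [Hz1 Hz2]].
        unfold w. rewrite Hz1. auto. }
      pose (W := fun y => (exist _ (w y) (proj2 (Hw y)) : interval (k e3))).
      assert (HW : is_hom W).
      { apply (@lift_hom (intervalRaw (k e3)) _ w (fun y => proj2 (Hw y))).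
        - destruct (Hw ea_one) as [H1 _]. rewrite !Hg_one, Hk12 in H1. change (w ea_one = k e3). congruence.
        - intros a b c0 H. simpl. apply i_s_spec. split; [|apply Hw].
          pose proof (Hg_add e1 _ _ _ H) as A1. pose proof (Hg_add e2 _ _ _ H) as A2.
          destruct (Hw c0) as [A3 _].
          destruct (shuffle A1 A2 A3) as [p [q [P1 [P2 P3]]]].
          rewrite (proj1 (Hw a)) in P1. rewrite (proj1 (Hw b)) in P2.
          injection P1 as <-. injection P2 as <-. exact P3. }
      assert (HWc : forall d x, W (c d x) = leg e3 d x).
      { intros d x. apply val_inj. simpl. destruct (Hw (c d x)) as [H1 _].
        rewrite !Hg_c in H1.
        assert (H2 : ea_sum (c' d (tF d e1 x)) (c' d (tF d e2 x)) = Some (c' d (tF d e3 x))).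
        { apply (hom_sum (Hc'hom d)). apply (bh_l (tens_bihom (HtF d))). exact He. }
        congruence. }
      destruct (HU e3) as [_ [_ Huniq]].
      pose proof (Huniq W HW HWc y) as HWy.
      replace (g e3 y) with (w y); [apply Hw|].
      unfold g. rewrite <- HWy. reflexivity.
    - intros e a b c0 H. apply Hg_add. exact H.
    - rewrite Hg_one. unfold k. rewrite (bh_one (tens_bihom (HtF d0))). apply (hom_one (Hc'hom d0)). }
  destruct (proj2 HtG G' g Hgb) as [Uu [HUu [HUut HUuniq]]].
  exists Uu. split; [exact HUu|split].
  - intros d z. apply (tensor_ext (HtF d) (hom_comp (Hh d) HUu) (Hc'hom d)).
    intros e x. rewrite Hheq, HUut, Hg_c. reflexivity.
  - intros u' Hu' Hu'c. apply HUuniq; [exact Hu'|].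
    intros e y.
    assert (HtGone : u' (tG e ea_one) = k e).
    { rewrite <- (hom_one (Hchom d0)), <- Hheq, Hu'c. reflexivity. }
    assert (HVle : forall y, le (u' (tG e y)) (k e)).
    { intro y0. rewrite <- HtGone. apply (hom_le Hu').
      exact (le_sum_l (bh_r (tens_bihom HtG) e (compl_r y0))). }
    pose (V := fun y => (exist _ (u' (tG e y)) (HVle y) : interval (k e))).
    assert (HV : is_hom V).
    { apply (@lift_hom (intervalRaw (k e)) _ (fun y => u' (tG e y)) HVle).
      - exact HtGone.
      - intros a b c0 H. simpl. apply i_s_spec. split; [|apply HVle].
        apply (hom_sum Hu'). apply (bh_r (tens_bihom HtG)). exact H. }
    assert (HVc : forall d x, V (c d x) = leg e d x).
    { intros d x. apply val_inj. simpl. rewrite <- Hheq. apply Hu'c. }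
    destruct (HU e) as [_ [_ Huniq]].
    pose proof (Huniq V HV HVc y) as HVy.
    unfold g. rewrite <- HVy. reflexivity.
Qed.

Lemma two_pres (D : SmallCategory) (E : EffectAlgebra) :
  ea_iso E two -> tensor_preserves_colimits_over E D.
Proof.
  intros [phi [psi [Hphi [Hpsi [Hpp Hpp']]]]] F G c Hc TF tF HtF TG tG HtG m Hm Hmeq h Hh Hheq.
  split; [exact (image_cocone Hc HtF Hm Hmeq Hh Hheq)|].
  destruct Hc as [[Hchom Hccomp] Hcuniv].
  intros G' c' [Hc'hom Hc'comp].
  assert (Hcoc : is_cocone (fun a b f => dmap F f) (fun d x => c' d (tF d ea_one x))).
  { split.
    - intro d. split.
      + rewrite (bh_one (tens_bihom (HtF d))). apply (hom_one (Hc'hom d)).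
      + intros a b c0 H. apply (hom_sum (Hc'hom d)). apply (bh_r (tens_bihom (HtF d))). exact H.
    - intros a b f x. rewrite <- Hmeq, Hc'comp. reflexivity. }
  destruct (Hcuniv G' _ Hcoc) as [v [Hv [Hvc Hvuniq]]].
  assert (He1 : forall e, phi e = true -> e = ea_one).
  { intros e H. rewrite <- (Hpp e), H. exact (hom_one Hpsi). }
  assert (He0 : forall e, phi e = false -> e = ea_zero).
  { intros e H. rewrite <- (Hpp e), H. exact (hom_zero Hpsi). }
  pose (g := fun e y => if phi e then v y else ea_zero).
  assert (Hgb : is_bihom g).
  { split; [|split].
    - intros y e1 e2 e3 He. pose proof (hom_sum Hphi He) as X. unfold g.
      destruct (phi e1), (phi e2), (phi e3); simpl in X; try discriminate.
      + apply zero_r.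
      + apply zero_l.
      + apply zero_r.
    - intros e a b c0 H. unfold g. destruct (phi e).
      + exact (hom_sum Hv H).
      + apply zero_r.
    - unfold g. rewrite (hom_one Hphi). simpl. exact (hom_one Hv). }
  destruct (proj2 HtG G' g Hgb) as [Uu [HUu [HUut HUuniq]]].
  exists Uu. split; [exact HUu|split].
  - intros d z. apply (tensor_ext (HtF d) (hom_comp (Hh d) HUu) (Hc'hom d)).
    intros e x. rewrite Hheq, HUut. unfold g.
    destruct (phi e) eqn:Hp.
    + rewrite Hvc, (He1 e Hp). reflexivity.
    + rewrite (He0 e Hp), (bihom_zero_l (tens_bihom (HtF d))), (hom_zero (Hc'hom d)). reflexivity.
  - intros u' Hu' Hu'c. apply HUuniq; [exact Hu'|].
    intros e y. unfold g. destruct (phi e) eqn:Hp.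
    + rewrite (He1 e Hp).
      assert (Hw : is_hom (fun y => u' (tG ea_one y))).
      { split.
        - rewrite (bh_one (tens_bihom HtG)). exact (hom_one Hu').
        - intros a b c0 H. apply (hom_sum Hu'). apply (bh_r (tens_bihom HtG)). exact H. }
      apply (Hvuniq _ Hw). intros d x. rewrite <- Hheq. apply Hu'c.
    + rewrite (He0 e Hp), (bihom_zero_l (tens_bihom HtG)). exact (hom_zero Hu').
Qed.

Lemma bihom_triv (E F T : EffectAlgebra) (t : E -> F -> T) :
  is_bihom t -> (@ea_zero E) = ea_one -> (@ea_zero T) = ea_one.
Proof.
  intros Ht H. rewrite <- (bihom_zero_l Ht ea_one), H. apply (bh_one Ht).
Qed.

Lemma one_pres (D : SmallCategory) (E : EffectAlgebra) :
  ea_iso E one -> inhabited (Obj D) -> tensor_preserves_colimits_over E D.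
Proof.
  intros [phi [psi [Hphi [Hpsi [Hpp _]]]]] [d0] F G c Hc TF tF HtF TG tG HtG m Hm Hmeq h Hh Hheq.
  split; [exact (image_cocone Hc HtF Hm Hmeq Hh Hheq)|].
  intros G' c' [Hc'hom _].
  assert (E01 : (@ea_zero E) = ea_one).
  { rewrite <- (Hpp ea_zero), <- (Hpp ea_one). destruct (phi ea_zero), (phi ea_one). reflexivity. }
  assert (T01 := bihom_triv (tens_bihom (HtF d0)) E01).
  assert (G01 : (@ea_zero G') = ea_one).
  { rewrite <- (hom_zero (Hc'hom d0)), <- (hom_one (Hc'hom d0)), T01. reflexivity. }
  exists (fun _ => ea_one). split; [split|split].
  - reflexivity.
  - intros a b c0 _. rewrite <- G01. apply zero_r.
  - intros d x. rewrite (triv G01 (c' d x)). symmetry. exact G01.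
  - intros u' _ _ z. rewrite (triv G01 (u' z)). exact G01.
Qed.

Definition tp2 (E : EffectAlgebra) (e : E) (b : ea_car two) : E := if b then e else ea_zero.

Lemma tensor_two (E : EffectAlgebra) : is_tensor (@tp2 E).
Proof.
  assert (Hb : is_bihom (@tp2 E)).
  { split; [|split].
    - intros y a b c H. destruct y; simpl; [exact H|apply zero_r].
    - intros x a b c H. destruct a, b; simpl in H; try discriminate; injection H as <-; simpl.
      + apply zero_r.
      + apply zero_l.
      + apply zero_r.
    - reflexivity. }
  split; [exact Hb|].
  intros G g Hg. exists (fun e => g e true). split; [split|split].
  - exact (bh_one Hg).
  - intros a b c H. exact (bh_l Hg true H).
  - intros x y. destruct y; simpl; [reflexivity|].
    rewrite (bihom_zero_l Hg). symmetry. exact (bihom_zero_r Hg x).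
  - intros h' _ Hh' z. exact (Hh' z true).
Qed.

Definition iota (G : EffectAlgebra) (b : ea_car two) : G := if b then ea_one else ea_zero.

Lemma iota_hom (G : EffectAlgebra) : is_hom (@iota G).
Proof.
  split; [reflexivity|].
  intros a b c H. destruct a, b; simpl in H; try discriminate; injection H as <-; simpl.
  - apply zero_r.
  - apply zero_l.
  - apply zero_r.
Qed.

Lemma two_hom_eq (G : EffectAlgebra) (u : two -> G) : is_hom u -> forall b, u b = iota G b.
Proof.
  intros Hu b. destruct b; simpl.
  - exact (hom_one Hu).
  - exact (hom_zero Hu).
Qed.

Definition const2 (D : SmallCategory) : Diagram D.
Proof.
  refine {| dobj := fun _ => two; dmap := fun a b f x => x |}.
  - intros; apply hom_id.
  - reflexivity.
  - reflexivity.
Defined.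

Lemma const2_colim (D : SmallCategory) :
  is_colimit (fun a b f => dmap (const2 D) f) (G := two) (fun d x => x).
Proof.
  split.
  - split; [intro; apply hom_id | reflexivity].
  - intros G' c' [Hc' _]. exists (@iota G'). split; [apply iota_hom|split].
    + intros d x. symmetry. exact (two_hom_eq (Hc' d) x).
    + intros u' Hu' _ z. exact (two_hom_eq Hu' z).
Qed.

Lemma zz_trans (D : SmallCategory) (a b c : Obj D) : zigzag a b -> zigzag b c -> zigzag a c.
Proof.
  induction 1 as [a|a b0 c0 f Z IH|a b0 c0 f Z IH]; intro H; auto.
  - eapply zz_fwd; [exact f|]. auto.
  - eapply zz_bwd; [exact f|]. auto.
Qed.

Lemma iso_one_of_triv (E : EffectAlgebra) : (@ea_zero E) = ea_one -> ea_iso E one.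
Proof.
  intro H. exists (fun _ => tt), (fun _ => ea_one). split; [|split; [|split]].
  - split; [reflexivity|]. intros; reflexivity.
  - split; [reflexivity|]. intros a b c _. simpl. rewrite <- H. apply zero_r.
  - intro x. rewrite (triv H x). symmetry. exact H.
  - intros []. reflexivity.
Qed.

Lemma iso_two_of_01 (E : EffectAlgebra) : (@ea_zero E) <> ea_one ->
  (forall x : E, x = ea_zero \/ x = ea_one) -> ea_iso E two.
Proof.
  intros H01 Hx.
  pose (phi := fun x : E => if excluded_middle_informative (x = ea_one) then true else false).
  assert (P1 : phi ea_one = true).
  { unfold phi. destruct (excluded_middle_informative _); congruence. }
  assert (P0 : phi ea_zero = false).
  { unfold phi. destruct (excluded_middle_informative _); congruence. }
  exists phi, (@iota E). split; [|split; [apply iota_hom|split]].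
  - split; [exact P1|].
    intros a b c H.
    destruct (Hx a) as [-> | ->]; destruct (Hx b) as [-> | ->].
    + rewrite zero_r in H. injection H as <-. rewrite P0. reflexivity.
    + rewrite zero_l in H. injection H as <-. rewrite P0, P1. reflexivity.
    + rewrite zero_r in H. injection H as <-. rewrite P0, P1. reflexivity.
    + exfalso. apply H01. symmetry. exact (one_sum_zero H).
  - intro x. destruct (Hx x) as [-> | ->]; [rewrite P0|rewrite P1]; reflexivity.
  - intros [|]; simpl; auto.
Qed.

Definition tr (E : EffectAlgebra) (x : E) : bool :=
  if excluded_middle_informative (x <> ea_zero /\ x <> ea_one) then true else false.

Lemma tr_true (E : EffectAlgebra) (x : E) : x <> ea_zero -> x <> ea_one -> tr x = true.
Proof. intros; unfold tr; destruct (excluded_middle_informative _); tauto. Qed.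
Lemma tr_false (E : EffectAlgebra) (x : E) : x = ea_zero \/ x = ea_one -> tr x = false.
Proof. intros; unfold tr; destruct (excluded_middle_informative _); [|reflexivity]. exfalso; tauto. Qed.

Lemma inl_P (E : EffectAlgebra) (x : E) : h_P (x, false).
Proof. unfold h_P; simpl; discriminate. Qed.
Lemma inr_P (E : EffectAlgebra) (x : E) : h_P (x, tr x).
Proof. unfold h_P, tr; simpl. destruct (excluded_middle_informative _); [auto|discriminate]. Qed.

Definition hinl (E : EffectAlgebra) (x : E) : hsum E := exist _ (x, false) (@inl_P E x).
Definition hinr (E : EffectAlgebra) (x : E) : hsum E := exist _ (x, tr x) (@inr_P E x).

Lemma hinl_hom (E : EffectAlgebra) : is_hom (@hinl E).
Proof.
  apply (@lift_hom (hsRaw E) E (fun x => (x, false)) (@inl_P E)).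
  - reflexivity.
  - intros a b c H. simpl. apply h_s_spec. split; [exact H|split; [auto|]].
    unfold tagf. destruct (excluded_middle_informative _); reflexivity.
Qed.

Lemma hinr_hom (E : EffectAlgebra) : is_hom (@hinr E).
Proof.
  apply (@lift_hom (hsRaw E) E (fun x => (x, tr x)) (@inr_P E)).
  - simpl. rewrite tr_false; auto.
  - intros a b c H. simpl. apply h_s_spec. split; [exact H|split].
    + destruct (classic (a = ea_zero)) as [Ha|Ha]; [auto|].
      destruct (classic (b = ea_zero)) as [Hb|Hb]; [auto|].
      left. rewrite (tr_true Ha (sum_nz_not_one H Hb)).
      rewrite ea_comm in H. rewrite (tr_true Hb (sum_nz_not_one H Ha)). reflexivity.
    + destruct (classic (c = ea_one)) as [Hc|Hc].
      * rewrite tagf_one by exact Hc. apply tr_false; auto.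
      * rewrite tagf_not by exact Hc.
        destruct (classic (c = ea_zero)) as [Hc0|Hc0].
        -- subst c. pose proof (positivity H) as Ha. rewrite ea_comm in H.
           pose proof (positivity H) as Hb. subst a b.
           rewrite !tr_false; auto.
        -- rewrite (tr_true Hc0 Hc).
           destruct (classic (a = ea_zero)) as [Ha|Ha].
           ++ subst a. apply sum_zero_l_eq in H. subst c. rewrite (tr_true Hc0 Hc).
              rewrite orb_true_r. reflexivity.
           ++ assert (Ha1 : a <> ea_one).
              { intro Ha1. subst a. apply Hc. rewrite (one_sum_zero H) in H.
                apply sum_zero_r_eq in H. auto. }
              rewrite (tr_true Ha Ha1). reflexivity.
Qed.

Lemma forward (D : SmallCategory) (E : EffectAlgebra) :
  tensor_preserves_colimits_over E D ->
  connected D \/ ea_iso E two \/ (ea_iso E one /\ inhabited (Obj D)).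
Proof.
  intro P.
  pose proof (P (const2 D) two (fun d x => x) (const2_colim D) (fun _ => E) (fun _ => @tp2 E)
     (fun _ => tensor_two E) E (@tp2 E) (tensor_two E) (fun a b f x => x)
     (fun _ _ _ => hom_id E) (fun _ _ _ _ _ => eq_refl) (fun _ x => x)
     (fun _ => hom_id E) (fun _ _ _ => eq_refl)) as Hcol.
  destruct Hcol as [_ Hcol].
  destruct (classic (connected D)) as [Hc|Hnc]; [left; exact Hc|].
  destruct (classic (ea_iso E two)) as [H2|Hn2]; [right; left; exact H2|].
  destruct (classic (ea_iso E one /\ inhabited (Obj D))) as [H1|Hn1]; [right; right; exact H1|].
  exfalso.
  destruct (classic (inhabited (Obj D))) as [[d0]|Hni].
  - assert (Hab : exists a b : Obj D, ~ zigzag a b).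
    { apply NNPP. intro Hn. apply Hnc. split; [exists; exact d0|].
      intros a b. apply NNPP. intro Hz. apply Hn. eauto. }
    destruct Hab as [a [b Hab]].
    assert (Hx0 : exists x0 : E, x0 <> ea_zero /\ x0 <> ea_one).
    { apply NNPP. intro Hn.
      destruct (classic ((@ea_zero E) = ea_one)) as [H01|H01].
      - apply Hn1. split; [exact (iso_one_of_triv H01)|exists; exact d0].
      - apply Hn2. apply (iso_two_of_01 H01). intro x.
        destruct (classic (x = ea_zero)); [auto|].
        destruct (classic (x = ea_one)); [auto|]. exfalso. eauto. }
    destruct Hx0 as [x0 [Hx0 Hx1]].
    pose (c' := fun d (x : E) => if excluded_middle_informative (zigzag a d) then hinl x else hinr x).
    assert (Hcoc : is_cocone (fun (a0 b0 : Obj D) (_ : Hom a0 b0) (x : E) => x) (G := hsum E) c').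
    { split.
      - intro d. unfold c'. destruct (excluded_middle_informative _); [apply hinl_hom|apply hinr_hom].
      - intros d1 d2 f x. unfold c'.
        destruct (excluded_middle_informative (zigzag a d2)) as [Z2|Z2];
        destruct (excluded_middle_informative (zigzag a d1)) as [Z1|Z1]; auto; exfalso.
        + apply Z1. apply (zz_trans Z2). eapply zz_bwd; [exact f|apply zz_refl].
        + apply Z2. apply (zz_trans Z1). eapply zz_fwd; [exact f|apply zz_refl]. }
    destruct (Hcol _ c' Hcoc) as [u [_ [Hu _]]].
    pose proof (Hu a x0) as Ua. pose proof (Hu b x0) as Ub.
    unfold c' in Ua, Ub.
    destruct (excluded_middle_informative (zigzag a a)) as [_|Zaa]; [|apply Zaa; apply zz_refl].
    destruct (excluded_middle_informative (zigzag a b)) as [Zab|_]; [contradiction|].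
    rewrite Ua in Ub. apply (f_equal (@proj1_sig _ _)) in Ub. simpl in Ub.
    rewrite (tr_true Hx0 Hx1) in Ub. discriminate.
  - apply Hn2.
    assert (Hvac : forall (G' : EffectAlgebra) (c' : forall d : Obj D, E -> G'),
               is_cocone (fun (a0 b0 : Obj D) (_ : Hom a0 b0) (x : E) => x) c').
    { intros G' c'. split; intro d; exfalso; apply Hni; exists; exact d. }
    pose (v := fun (d : Obj D) (x : E) => match Hni (inhabits d) return ea_car two with end).
    destruct (Hcol two v (Hvac _ _)) as [u [Hu _]].
    destruct (Hcol E (fun d x => x) (Hvac _ _)) as [u0 [_ [_ Hu0]]].
    exists u, (@iota E). split; [exact Hu|split; [apply iota_hom|split]].
    + intro x. rewrite (Hu0 (fun x => iota E (u x)) (hom_comp Hu (iota_hom E))),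
                   (Hu0 (fun x => x) (hom_id E)); auto;
      intros d; exfalso; apply Hni; exists; exact d.
    + intro y. destruct y; simpl; [exact (hom_one Hu)|exact (hom_zero Hu)].
Qed.

Theorem theorem3p5 (D : SmallCategory) (E : EffectAlgebra) :
  tensor_preserves_colimits_over E D <->
  (connected D \/ ea_iso E two \/ (ea_iso E one /\ inhabited (Obj D))).
Proof.
  split; [apply forward|].
  intros [H|[H|[H1 H2]]].
  - apply conn_pres; exact H.
  - apply two_pres; exact H.
  - apply one_pres; assumption.
Qed.
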